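(* Let $\lambda$ be a partition, $\nu\in\mathcal{U}(\lambda)$, and $(x,y)=\nu/\lambda$. Let $u,v\ge0$ be integers, $c=(x+u,y+v)$, $c_1=(x+u,y)$ and $c_2=(x,y+v)$. Then \[ P^{q,t}_\lambda(\nu\mid c)=P^{q,t}_\lambda(\nu\mid c_1)\,P^{q,t}_\lambda(\nu\mid c_2). \]
   Context: Partitions are Young diagrams in French convention: cells $(x,y)\in\mathbb{Z}_{>0}^2$ with $x\le\lambda_y$; $\lambda'$ is the conjugate, with $\lambda_j=0$ for $j>\lambda'_1$ and $\lambda'_i=0$ for $i>\lambda_1$. $\mathcal{U}(\lambda)$ is the set of partitions obtained by adding one cell to $\lambda$. $\overline{\lambda}=\mathbb{Z}_{>0}^2\setminus\lambda$. For $c=(x,y)\in\overline{\lambda}$: ${\rm arm}_\lambda(c)=\{(i,y):\lambda_y<i<x\}$, ${\rm leg}_\lambda(c)=\{(x,j):\lambda'_x<j<y\}$, $a(c)=|{\rm arm}_\lambda(c)|$, $\ell(c)=|{\rm leg}_\lambda(c)|$; $c$ is an outer corner of $\lambda$ iff $a(c)=\ell(c)=0$. For $c'\in{\rm arm}_\lambda(c)\cup{\rm leg}_\lambda(c)$, $P(c\rightarrow c')=q^{a(c)-i}\frac{t^{\ell(c)}(1-q)}{1-q^{a(c)}t^{\ell(c)}}$ if $c'=(x-i,y)$, and $P(c\rightarrow c')=t^{j-1}\frac{1-t}{1-q^{a(c)}t^{\ell(c)}}$ if $c'=(x,y-j)$. The exterior $(q,t)$-hook walk from $c$ terminates if $c$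 is an outer corner, otherwise moves to $c'$ with probability $P(c\rightarrow c')$ and repeats; $P^{q,t}_\lambda(\nu\mid c)$ is the probability (a rational function in $q,t$) that it terminates at the cell $\nu/\lambda$. *)

(* Defs.v *)
From HB Require Import structures.
From mathcomp Require Import all_boot all_order all_algebra.
Set Implicit Arguments. Unset Strict Implicit. Unset Printing Implicit Defensive.
Import Order.TTheory GRing.Theory Num.Theory.

Definition is_partition (l : seq nat) : bool :=
  sorted geq l && all (fun p => 0 < p) l.

(* lambda_y for y >= 1 (French convention, rows indexed from 1); 0 beyond. *)
Definition part (l : seq nat) (y : nat) : nat := nth 0 l y.-1.
Definition conj_part (l : seq nat) (x : nat) : nat := count (fun p => x <= p) l.

Definition in_diag (l : seq nat) (c : nat * nat) : bool :=
  [&& 0 < c.1, 0 < c.2 & c.1 <= part l c.2].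

Definition adds_one_cell (lam nu : seq nat) : bool :=
  [&& is_partition nu,
      all (fun i => nth 0 lam i <= nth 0 nu i) (iota 0 (size lam))
    & sumn nu == (sumn lam).+1].

Definition K : fieldType := {fraction {poly {poly rat}}}.
Definition qv : K := tofrac ('X%:P).
Definition tv : K := tofrac 'X.

Local Open Scope ring_scope.

(* a(c) and l(c) for c = (x,y) outside lambda *)
Definition arm_len (l : seq nat) (c : nat * nat) : nat := (c.1 - part l c.2).-1.
Definition leg_len (l : seq nat) (c : nat * nat) : nat := (c.2 - conj_part l c.1).-1.

(* Probability that the exterior (q,t)-hook walk from c terminates at cell d,
   computed with fuel (each step strictly decreases x + y). *)
Fixpoint hook_walk (l : seq nat) (d : nat * nat) (fuel : nat) (c : nat * nat) : K :=
  match fuel with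
  | 0%N => 0
  | f.+1 =>
    let a := arm_len l c in
    let b := leg_len l c in
    if (a == 0%N) && (b == 0%N) then (if c == d then 1 else 0)
    else
      let den := 1 - qv ^+ a * tv ^+ b in
      \sum_(1 <= i < a.+1)
         (qv ^+ (a - i) * (tv ^+ b * (1 - qv)) / den) * hook_walk l d f (c.1 - i, c.2)%N
    + \sum_(1 <= j < b.+1)
         (tv ^+ j.-1 * (1 - tv) / den) * hook_walk l d f (c.1, c.2 - j)%N
  end.

(* P^{q,t}_lambda(nu | c), where d = nu/lambda. *)
Definition hookP (l : seq nat) (d : nat * nat) (c : nat * nat) : K :=
  hook_walk l d (c.1 + c.2) c.

(* Main.v *)
Require Import Defs.
From mathcomp Require Import all_boot all_order all_algebra.
From mathcomp Require Import zify ring.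

Lemma sumn_ord (s : seq nat) N : size s <= N -> sumn s = \sum_(k < N) nth 0 s k.
Proof.
elim: s N => [|a s IH] N H.
- by rewrite big1 // => i _; rewrite nth_nil.
- case: N H => [|N] //= H; by rewrite big_ord_recl /= (IH N).
Qed.

Lemma diff_rows (l n : seq nat) r k :
  (forall i, nth 0 l i <= nth 0 n i) -> sumn n = (sumn l).+1 ->
  nth 0 l r < nth 0 n r -> k != r -> nth 0 l k = nth 0 n k /\ nth 0 n r = (nth 0 l r).+1.
Proof.
move=> Hle Hs Hr Hkr.
set N := (maxn k r).+1 + size l + size n.
have Hl : size l <= N by rewrite /N; lia.
have Hn : size n <= N by rewrite /N; lia.
have HkN : k < N by rewrite /N; lia.
have HrN : r < N by rewrite /N; lia.
have E : \sum_(i < N) nth 0 n i = \sum_(i < N) nth 0 l i + \sum_(i < N) (nth 0 n i - nth 0 l i).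
  by rewrite -big_split /=; apply: eq_bigr => i _; rewrite addnC subnK.
rewrite -!sumn_ord // Hs in E.
have E1 : \sum_(i < N) (nth 0 n i - nth 0 l i) = 1 by lia.
rewrite (bigD1 (Ordinal HrN)) //= (bigD1 (Ordinal HkN)) //= in E1.
have := Hle k; have := Hle r. lia.
Qed.

Lemma count_prefix (p : pred nat) (s : seq nat) r :
  (forall k, k < r -> p (nth 0 s k)) ->
  (forall k, r <= k -> k < size s -> ~~ p (nth 0 s k)) ->
  r <= size s -> count p s = r.
Proof.
elim: s r => [|a s IH] r H1 H2 /=; first by case: r H1 H2.
move=> Hr; case: r H1 H2 Hr => [|r] H1 H2 Hr.
  rewrite (negbTE (H2 0 (leqnn 0) erefl)) add0n.
  apply: (IH 0) => // k _ Hk; exact: (H2 k.+1).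
rewrite (H1 0 erefl) add1n (IH r) // => k Hk.
- exact: (H1 k.+1).
- exact: (H2 k.+1).
Qed.

Lemma nth_mono (l : seq nat) i j : sorted geq l -> i <= j -> nth 0 l j <= nth 0 l i.
Proof.
move=> Hs Hij; case: (ltnP j (size l)) => Hj.
- have Hi : i < size l by apply: leq_ltn_trans Hj.
  have := @sorted_leq_nth nat geq (fun a b c h1 h2 => leq_trans h2 h1) leqnn 0 l Hs i j.
  by rewrite !inE; apply.
- by rewrite nth_default.
Qed.

Lemma corner_facts lam nu x y :
  is_partition lam -> adds_one_cell lam nu ->
  in_diag nu (x, y) -> ~~ in_diag lam (x, y) ->
  [/\ 0 < x /\ 0 < y, part lam y = x.-1, conj_part lam x = y.-1,
      (forall Y, y <= Y -> part lam Y <= x.-1) &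
      (forall X, x <= X -> conj_part lam X <= conj_part lam x)].
Proof.
case/andP=> Hsl _ /and3P[/andP[Hsn _] /allP Hall /eqP Hsum].
case/and3P=> /= Hx Hy Hxn; rewrite /in_diag /= Hx Hy /= -ltnNge => Hxl.
have Hle : forall i, nth 0 lam i <= nth 0 nu i.
  move=> i; case: (ltnP i (size lam)) => Hi.
  - by apply: Hall; rewrite mem_iota.
  - by rewrite nth_default.
move: Hxn Hxl; rewrite /part => Hxn Hxl.
set r := y.-1 in Hxn Hxl *.
have Hr : nth 0 lam r < nth 0 nu r by apply: leq_trans Hxn.
have Hne : r.+1 != r by lia.
have [_ Hnr] := diff_rows _ _ _ _ Hle Hsum Hr Hne.
have Hlr : nth 0 lam r = x.-1 by lia.
have Hpart : forall Y, y <= Y -> nth 0 lam Y.-1 <= x.-1.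
  by move=> Y HY; rewrite -Hlr; apply: nth_mono => //; rewrite /r; lia.
have Hbig : forall k, k < r -> x <= nth 0 lam k.
  move=> k Hk.
  have Hne' : k != r by lia.
  have [-> _] := diff_rows _ _ _ _ Hle Hsum Hr Hne'.
  apply: leq_trans Hxn _; apply: nth_mono => //; exact: ltnW.
have Hconj : conj_part lam x = r.
  apply: count_prefix.
  - exact: Hbig.
  - move=> k Hk _; rewrite -ltnNge; apply: leq_ltn_trans (nth_mono _ _ _ Hsl Hk) _; lia.
  - case Er: r Hbig => [//|r'] Hb; have := Hb r' (ltnSn r').
    by case: (ltnP r' (size lam)) => // H; rewrite nth_default //; lia.
split => //.
move=> X HX; apply: sub_count => p /=; exact: leq_trans.
Qed.
Import GRing.Theory.
Local Open Scope ring_scope.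

Lemma den_neq0 (A b : nat) : (0 < A + b)%N -> 1 - qv ^+ A * tv ^+ b != 0.
Proof.
move=> Hab; rewrite subr_eq0 /qv /tv -!rmorphXn -rmorphM -(rmorph1 (@tofrac _)) tofrac_eq.
apply/eqP => E.
case: b Hab E => [|b] Hab E.
- rewrite expr0 mulr1 -polyC1 in E; move/polyC_inj: E => E.
  have := congr1 (fun p : {poly rat} => size p) E; rewrite size_polyXn size_poly1; lia.
- have := congr1 (fun p : {poly {poly rat}} => p`_0) E.
  rewrite coef1 coef0M coefXn /= mulr0 => /eqP; rewrite oner_eq0.
  done.
Qed.

Section Walk.
Variables (l : seq nat) (d : nat * nat).

Lemma walk_zero_col f c : (c.1 < d.1)%N -> hook_walk l d f c = 0.
Proof.
elim: f c => [//|f IH] [X Y] /= H.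
case: ifP => _.
  case: eqP => [E|//]; by move: H; rewrite -E /= ltnn.
rewrite !big1_seq ?addr0 // => i _; rewrite IH ?mulr0 //= ; lia.
Qed.

Lemma walk_zero_row f c : (c.2 < d.2)%N -> hook_walk l d f c = 0.
Proof.
elim: f c => [//|f IH] [X Y] /= H.
case: ifP => _.
  case: eqP => [E|//]; by move: H; rewrite -E /= ltnn.
rewrite !big1_seq ?addr0 // => i _; rewrite IH ?mulr0 //= ; lia.
Qed.

Lemma walk_fuelS F c : (0 < c.1)%N -> (0 < c.2)%N -> (c.1 + c.2 <= F)%N ->
  hook_walk l d F c = hook_walk l d F.+1 c.
Proof.
elim: F c => [|F IH] [X Y] /= H1 H2 H3; first lia.
case: ifP => // _.
congr (_ + _); apply: eq_big_nat => i /andP[Hi1 Hi2]; congr (_ * _); apply: IH => /=;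
  rewrite /arm_len /leg_len /= in Hi2; lia.
Qed.

Lemma walk_fuel F c : (0 < c.1)%N -> (0 < c.2)%N -> (c.1 + c.2 <= F)%N ->
  hook_walk l d F c = hookP l d c.
Proof.
move=> H1 H2 H3; rewrite -(subnK H3); set k := (F - _)%N.
elim: k => [//|k IH]; rewrite addSn -walk_fuelS // ; lia.
Qed.

Lemma hookP_rec X Y : (0 < X)%N -> (0 < Y)%N ->
  ~~ ((arm_len l (X, Y) == 0%N) && (leg_len l (X, Y) == 0%N)) ->
  hookP l d (X, Y) =
      \sum_(1 <= i < (arm_len l (X, Y)).+1)
         (qv ^+ (arm_len l (X, Y) - i) * (tv ^+ (leg_len l (X, Y)) * (1 - qv))
            / (1 - qv ^+ arm_len l (X, Y) * tv ^+ leg_len l (X, Y))) * hookP l d (X - i, Y)%N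
    + \sum_(1 <= j < (leg_len l (X, Y)).+1)
         (tv ^+ j.-1 * (1 - tv) / (1 - qv ^+ arm_len l (X, Y) * tv ^+ leg_len l (X, Y)))
            * hookP l d (X, Y - j)%N.
Proof.
move=> HX HY Hab.
rewrite /hookP /=; case E: (X + Y)%N => [|F]; first lia.
rewrite /= (negbTE Hab).
congr (_ + _); apply: eq_big_nat => i /andP[Hi1 Hi2]; congr (_ * _); rewrite walk_fuel //=;
  rewrite /arm_len /leg_len /= in Hi2 Hab; lia.
Qed.
End Walk.

Lemma hookP_corner lam x y : (0 < x)%N -> (0 < y)%N ->
  arm_len lam (x, y) = 0%N -> leg_len lam (x, y) = 0%N -> hookP lam (x, y) (x, y) = 1.
Proof.
move=> Hx Hy Ha Hb; rewrite /hookP /=; case E: (x + y)%N => [|F]; first lia.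
by rewrite /= Ha Hb /= eqxx.
Qed.

Lemma main_prod lam nu x y :
  is_partition lam -> adds_one_cell lam nu ->
  in_diag nu (x, y) -> ~~ in_diag lam (x, y) ->
  forall A B, hookP lam (x, y) (x + A, y + B)%N
   = hookP lam (x, y) (x + A, y)%N * hookP lam (x, y) (x, y + B)%N.
Proof.
move=> H1 H2 H3 H4.
have [[Hx Hy] Hpy Hcx HpY HcX] := corner_facts _ _ _ _ H1 H2 H3 H4.
set f := fun A B => hookP lam (x, y) (x + A, y + B)%N.
set al := fun B => (x.-1 - part lam (y + B))%N.
set be := fun A => (y.-1 - conj_part lam (x + A))%N.
have armE : forall A B, arm_len lam (x + A, y + B)%N = (A + al B)%N.
  move=> A B; rewrite /arm_len /al /=; have := HpY (y + B)%N (leq_addr _ _); lia.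
have legE : forall A B, leg_len lam (x + A, y + B)%N = (B + be A)%N.
  move=> A B; rewrite /leg_len /be /=; have := HcX (x + A)%N (leq_addr _ _); lia.
have al0 : al 0%N = 0%N by rewrite /al addn0 Hpy subnn.
have be0 : be 0%N = 0%N by rewrite /be addn0 Hcx subnn.
have f00 : f 0%N 0%N = 1.
  rewrite /f !addn0 hookP_corner //.
  - by have := armE 0%N 0%N; rewrite !addn0 al0.
  - by have := legE 0%N 0%N; rewrite !addn0 be0.
have rec2 : forall A B : nat, (0 < A + B)%N ->
  f A B * (1 - qv ^+ (A + al B)%N * tv ^+ (B + be A)%N) =
    \sum_(1 <= i < A.+1) qv ^+ (A + al B - i)%N * (tv ^+ (B + be A)%N * (1 - qv)) * f (A - i)%N B
  + \sum_(1 <= j < B.+1) tv ^+ j.-1 * (1 - tv) * f A (B - j)%N.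
  move=> A B HAB.
  have Hne := den_neq0 (A + al B) (B + be A) ltac:(lia).
  rewrite /f hookP_rec ?armE ?legE; [|lia|lia|lia].
  rewrite (@big_cat_nat _ _ _ A.+1 1 (A + al B).+1) /=; [|lia|lia].
  rewrite [X in _ + X + _]big1_seq ?addr0; last first.
    move=> i /andP[_]; rewrite mem_index_iota => /andP[Hi _]; rewrite /hookP walk_zero_col ?mulr0 //=; lia.
  rewrite (@big_cat_nat _ _ _ B.+1 1 (B + be A).+1) /=; [|lia|lia].
  rewrite [X in _ + (_ + X)]big1_seq ?addr0; last first.
    move=> i /andP[_]; rewrite mem_index_iota => /andP[Hi _]; rewrite /hookP walk_zero_row ?mulr0 //=; lia.
  rewrite mulrDl !mulr_suml; congr (_ + _); apply: eq_big_nat => i /andP[Hi1 Hi2].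
  - rewrite mulrAC divfK //; congr (_ * hookP _ _ (_, _)); lia.
  - rewrite mulrAC divfK //; congr (_ * hookP _ _ (_, _)); lia.
have Gsum : forall A : nat,
  \sum_(1 <= i < A.+1) qv ^+ (A - i)%N * (tv ^+ (be A) * (1 - qv)) * f (A - i)%N 0%N
  = f A 0%N * (1 - qv ^+ A * tv ^+ (be A)).
  case=> [|A].
    rewrite big_geq; last by [].
    by rewrite be0 !expr0 mulr1 subrr mulr0.
  have := rec2 A.+1 0%N erefl; rewrite al0 !addn0 add0n => ->.
  rewrite [X in _ = _ + X]big_geq; last by [].
  by rewrite addr0.
have Hsum : forall B : nat,
  \sum_(1 <= j < B.+1) tv ^+ j.-1 * (1 - tv) * f 0%N (B - j)%N
  = f 0%N B * (1 - qv ^+ (al B) * tv ^+ B).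
  case=> [|B].
    rewrite big_geq; last by [].
    by rewrite al0 !expr0 mulr1 subrr mulr0.
  have := rec2 0%N B.+1 erefl; rewrite be0 !addn0 add0n => ->.
  rewrite [X in _ = X + _]big_geq; last by [].
  by rewrite add0r.
have main : forall n A B : nat, (A + B <= n)%N -> f A B = f A 0%N * f 0%N B.
  elim=> [|n IH] A B HAB.
    have [-> ->] : A = 0%N /\ B = 0%N by lia.
    by rewrite f00 mulr1.
  case: (posnP (A + B)) => HAB0.
    have [-> ->] : A = 0%N /\ B = 0%N by lia.
    by rewrite f00 mulr1.
  have Hne := den_neq0 (A + al B) (B + be A) ltac:(lia).
  apply: (mulIf Hne); rewrite rec2 //.
  have -> : \sum_(1 <= i < A.+1) qv ^+ (A + al B - i)%N * (tv ^+ (B + be A)%N * (1 - qv)) * f (A - i)%N B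
     = \sum_(1 <= i < A.+1) (qv ^+ al B * tv ^+ B * f 0%N B) *
          (qv ^+ (A - i)%N * (tv ^+ (be A) * (1 - qv)) * f (A - i)%N 0%N).
    apply: eq_big_nat => i /andP[Hi1 Hi2]; rewrite IH; last lia.
    have -> : (A + al B - i = al B + (A - i))%N by lia.
    rewrite !exprD; ring.
  have -> : \sum_(1 <= j < B.+1) tv ^+ j.-1 * (1 - tv) * f A (B - j)%N
     = \sum_(1 <= j < B.+1) f A 0%N * (tv ^+ j.-1 * (1 - tv) * f 0%N (B - j)%N).
    apply: eq_big_nat => j /andP[Hj1 Hj2]; rewrite IH; last lia.
    ring.
  rewrite -!mulr_sumr Gsum Hsum !exprD; ring.
move=> A B; have := main (A + B)%N A B (leqnn _).
by rewrite /f !addn0.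
Qed.

Theorem lemma6p6 (lam nu : seq nat) (x y u v : nat) :
  is_partition lam ->
  adds_one_cell lam nu ->
  in_diag nu (x, y) -> ~~ in_diag lam (x, y) ->
  hookP lam (x, y) (x + u, y + v)%N
  = hookP lam (x, y) (x + u, y)%N * hookP lam (x, y) (x, y + v)%N.
Proof.
move=> H1 H2 H3 H4; exact: main_prod H1 H2 H3 H4 u v.
Qed.
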